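(* Let $N\ge1$, $f:\mathbb{N}^N\to\mathbb{N}$, $p$ a prime, $k\ge0$ and $\boldsymbol{\ell}\in\mathbb{N}^N$. Write $k=k_0+k_1p$ with $0\le k_0<p$, and $\boldsymbol{\ell}=\boldsymbol{\ell}_0+p\mathbf{x}$ with $\mathbf{x}\in\mathbb{N}^N$ and every entry of $\boldsymbol{\ell}_0$ in $\{0,\dots,p-1\}$. Then $$\binom{k}{\boldsymbol{\ell}}_f\equiv\sum_{\mathbf{m}\in\mathbb{N}^N}\binom{k_1}{\mathbf{x}-\mathbf{m}}_f\binom{k_0}{\boldsymbol{\ell}_0+p\mathbf{m}}_f\pmod p.$$
   Context: $\mathbb{N}=\{0,1,2,\dots\}$. For $k\ge0$ and $\mathbf{y}\in\mathbb{Z}^N$, $\binom{k}{\mathbf{y}}_f=\sum_{\mathbf{m}_1+\cdots+\mathbf{m}_k=\mathbf{y}} f(\mathbf{m}_1)\cdots f(\mathbf{m}_k)$ over tuples of vectors in $\mathbb{N}^N$ (in particular it is $0$ if $\mathbf{y}$ has a negative entry). *)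

(* Defs.v *)
From mathcomp Require Import all_boot all_order all_algebra.
Set Implicit Arguments. Unset Strict Implicit. Unset Printing Implicit Defensive.
Import GRing.Theory Num.Theory.

(* Vectors in N^N are functions 'I_N -> nat; vectors in Z^N are 'I_N -> int.
   binomf f k y = sum over k-tuples (m_1,...,m_k) of vectors in N^N with
   m_1 + ... + m_k = y of f(m_1)...f(m_k).  Any such tuple has all entries
   bounded by max_i |y_i|, so the sum ranges over the finite type of k-tuples
   of vectors with entries in 'I_(max |y_i| + 1); it is 0 if y has a negative
   entry (no tuple of natural vectors sums to it). *)
Definition bnd (N : nat) (y : 'I_N -> int) : nat := (\max_(i < N) `|y i|%N).+1.

Definition binomf (N : nat) (f : ('I_N -> nat) -> nat) (k : nat) (y : 'I_N -> int)
  : nat :=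
  \sum_(ms : {ffun 'I_k -> {ffun 'I_N -> 'I_(bnd y)}}
         | [forall i : 'I_N, ((\sum_(j < k) (val (ms j i)))%N%:Z)%R == y i])
     \prod_(j < k) f (fun i => val (ms j i)).

(* Main.v *)
Require Import Defs.
From mathcomp Require Import all_boot all_order all_algebra.
From mathcomp Require Import mpoly.
From mathcomp Require Import zify.
From Stdlib Require Import FunctionalExtensionality.
Import GRing.Theory Num.Theory.
Set Implicit Arguments. Unset Strict Implicit. Unset Printing Implicit Defensive.
Local Open Scope ring_scope.
Section S.
Variable (N : nat) (R : comNzRingType).

Lemma powE (J : finType) (m : J -> 'X_{1..N}) (c : J -> nat) k :
 (\sum_j ('X_[m j] *+ c j : {mpoly R[N]}))^+k =
   \sum_(ms : {ffun 'I_k -> J}) 'X_[\sum_i m (ms i)] *+ \prod_i c (ms i).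
Proof.
rewrite -{1}(card_ord k) -prodr_const bigA_distr_bigA; apply eq_bigr => ms _.
rewrite prodrMn; congr (_ *+ _); symmetry; exact: (big_morph _ (@mpolyXD _ _) (@mpolyX0 _ _)).
Qed.

Lemma coefE (J : finType) (m : J -> 'X_{1..N}) (c : J -> nat) y :
  (\sum_j ('X_[m j] *+ c j : {mpoly R[N]}))@_y = (\sum_(j | m j == y) c j)%:R.
Proof.
rewrite raddf_sum natr_sum [RHS]big_mkcond /=; apply eq_bigr => j _.
rewrite mcoeffMn mcoeffX. case: (m j == y) => /=; by rewrite ?mulr1n ?mul0rn.
Qed.
End S.

Section S2.
Variable (N : nat) (f : ('I_N -> nat) -> nat).

Definition bf B k (y : 'I_N -> nat) : nat :=
  (\sum_(ms : {ffun 'I_k -> {ffun 'I_N -> 'I_B}}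
         | [forall i, (\sum_(j < k) val (ms j i))%N == y i])
     (\prod_(j < k) f (fun i => val (ms j i))))%N.

Lemma bf_widen b B' k y : (b < B')%N -> (forall i, (y i < b.+1)%N) ->
  bf b.+1 k y = bf B' k y.
Proof.
move=> le hy; rewrite /bf.
pose h (ms : {ffun 'I_k -> {ffun 'I_N -> 'I_b.+1}}) : {ffun 'I_k -> {ffun 'I_N -> 'I_B'}} :=
  [ffun j => [ffun i => widen_ord le (ms j i)]].
pose h' (ms : {ffun 'I_k -> {ffun 'I_N -> 'I_B'}}) : {ffun 'I_k -> {ffun 'I_N -> 'I_b.+1}} :=
  [ffun j => [ffun i => inord (ms j i)]].
rewrite (reindex_onto h h').
  apply: eq_big => ms.
    rewrite /h /h'; set c := (X in _ && X).
    have -> : c.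
      apply/eqP/ffunP => j; apply/ffunP => i; rewrite !ffunE; apply/val_inj => /=.
      by rewrite inordK // ltn_ord.
    rewrite andbT; apply: eq_forallb => i.
    by under [in RHS]eq_bigr do rewrite !ffunE /=.
  move=> _; apply: eq_bigr => j _; congr f; apply: functional_extensionality => i.
  by rewrite /h !ffunE.
move=> ms /forallP hs; apply/ffunP => j; apply/ffunP => i; rewrite /h /h' !ffunE.
apply/val_inj => /=; rewrite inordK //.
have := hy i; rewrite -(eqP (hs i)) ltnS; apply: leq_trans.
by rewrite (bigD1 j) //= leq_addr.
Qed.

Lemma bf_indep b1 b2 k y : (forall i, (y i < b1.+1)%N) -> (forall i, (y i < b2.+1)%N) ->
  bf b1.+1 k y = bf b2.+1 k y.
Proof.
move=> h1 h2; rewrite (@bf_widen b1 (maxn b1 b2).+1) // ?(@bf_widen b2 (maxn b1 b2).+1) //;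
 rewrite ltnS ?leq_maxl ?leq_maxr //.
Qed.

Lemma binomf_bf b k (y : 'I_N -> nat) : (forall i, (y i < b.+1)%N) ->
  binomf f k (fun i => (y i)%:Z) = bf b.+1 k y.
Proof.
move=> hy.
have -> : binomf f k (fun i => (y i)%:Z) = bf (bnd (fun i => (y i)%:Z)) k y.
  rewrite /binomf /bf; apply: eq_bigl => ms; apply: eq_forallb => i.
  by rewrite eqz_nat.
rewrite /bnd; apply: bf_indep => // i; rewrite ltnS.
exact: (@leq_bigmax _ (fun i => `|(y i)%:Z|%N) i).
Qed.

Lemma binomf_neg k (y : 'I_N -> int) i0 : (y i0 < 0)%R -> binomf f k y = 0%N.
Proof.
move=> hy; rewrite /binomf big_pred0 // => ms; apply/forallP => /(_ i0) /eqP h.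
by move: hy; rewrite -h.
Qed.
End S2.

Lemma pt (a b xi l0i li mi p: nat): (l0i < p)%N -> li = (l0i + p*xi)%N ->
  [&& (mi <= xi)%N, (b == xi - mi)%N & (a == l0i + p*mi)%N] = ((mi == xi - b) && (a + p*b == li))%N.
Proof.
move=> h1 h2; apply/idP/idP.
  move=> /and3P [h3 /eqP h4 /eqP h5]; apply/andP; split; apply/eqP; nia.
move=> /andP [/eqP h3 /eqP h4].
have hb : (b <= xi)%N by nia.
apply/and3P; split; first by lia. all: apply/eqP; nia.
Qed.

Section S3.
Variable (N : nat) (f : ('I_N -> nat) -> nat) (R : comNzRingType).

Definition mk (v : 'I_N -> nat) : 'X_{1..N} := [multinom v i | i < N].

Definition FB B : {mpoly R[N]} :=
  \sum_(w : {ffun 'I_N -> 'I_B}) 'X_[mk (fun i => val (w i))] *+ f (fun i => val (w i)).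

Definition GB p B : {mpoly R[N]} :=
  \sum_(w : {ffun 'I_N -> 'I_B}) 'X_[mk (fun i => val (w i)) *+ p] *+ f (fun i => val (w i)).

Lemma coefFk B k y : ((FB B)^+k)@_(mk y) = (bf f B k y)%:R.
Proof.
rewrite /FB powE coefE /bf; congr (_%:R); apply: eq_bigl => ms.
apply/eqP/forallP => [h i | h].
  have := congr1 (fun m : 'X_{1..N} => m i) h; rewrite /= mnm_sumE mnmE => <-.
  by apply/eqP; apply: eq_bigr => j _; rewrite mnmE.
apply/mnmP => i; rewrite mnm_sumE mnmE -(eqP (h i)).
by apply: eq_bigr => j _; rewrite mnmE.
Qed.

Lemma prodcoef B k0 k1 p y :
  ((FB B ^+ k0) * (GB p B)^+k1)@_(mk y) =
  (\sum_(ms0 : {ffun 'I_k0 -> {ffun 'I_N -> 'I_B}})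
    \sum_(ms1 : {ffun 'I_k1 -> {ffun 'I_N -> 'I_B}})
    (if [forall i, (\sum_(j < k0) val (ms0 j i)) + p * (\sum_(j < k1) val (ms1 j i)) == y i]
     then (\prod_(j < k0) f (fun i => val (ms0 j i))) * (\prod_(j < k1) f (fun i => val (ms1 j i)))
     else 0))%N%:R.
Proof.
rewrite /FB /GB !powE mulr_suml.
under eq_bigr do rewrite mulr_sumr.
rewrite pair_bigA /=.
under eq_bigr do rewrite mulrnAl mulrnAr -mulrnA -mpolyXD.
rewrite coefE pair_bigA /= big_mkcond [in RHS]big_mkcond /=; congr (_%:R); apply: eq_bigr => [[ms0 ms1]] _ /=.
set c1 := (X in (if X then _ else _) = _); set c2 := (X in _ = if X then _ else _).
suff -> : c1 = c2 by rewrite mulnC.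
rewrite /c1 /c2; apply/eqP/forallP => [h i | h].
  have := congr1 (fun m : 'X_{1..N} => m i) h; rewrite /= mnmDE !mnm_sumE mnmE => <-.
  apply/eqP; congr addn; first by apply: eq_bigr => j _; rewrite mnmE.
  rewrite big_distrr /=; apply: eq_bigr => j _; rewrite mulmnE mnmE mulnC.
  done.
apply/mnmP => i; rewrite mnmDE !mnm_sumE mnmE -(eqP (h i)).
congr addn; first by apply: eq_bigr => j _; rewrite mnmE.
by rewrite big_distrr /=; apply: eq_bigr => j _; rewrite mulmnE mnmE mulnC.
Qed.
End S3.

Lemma frobF N (f : ('I_N -> nat) -> nat) p B : prime p ->
  (FB f 'F_p B)^+p = GB f 'F_p p B.
Proof.
move=> pr.
have chR : p \in [pchar {mpoly 'F_p[N]}].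
  rewrite !inE pr /= -mpolyC_nat.
  by rewrite (GRing.pcharf0 (pchar_Fp pr)) mpolyC0.
rewrite -(pFrobenius_autE chR) /FB /GB raddf_sum /=; apply: eq_bigr => w _.
by rewrite pFrobenius_autMn pFrobenius_autE mpolyXn.
Qed.

Lemma forall_and (I : finType) (a b : pred I) :
  [forall i, a i] && [forall i, b i] = [forall i, a i && b i].
Proof.
apply/andP/forallP => [[/forallP ha /forallP hb] i | h].
  by rewrite ha hb.
by split; apply/forallP => i; have /andP[] := h i.
Qed.

Lemma natid N (f : ('I_N -> nat) -> nat) p k0 k1 M B (l l0 x : 'I_N -> nat) :
  (forall i, (l0 i < p)%N) -> (forall i, l i = (l0 i + p * x i)%N) ->
  (forall i, (x i <= M)%N) ->
  (\sum_(ms0 : {ffun 'I_k0 -> {ffun 'I_N -> 'I_B}})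
    \sum_(ms1 : {ffun 'I_k1 -> {ffun 'I_N -> 'I_B}})
    (if [forall i, (\sum_(j < k0) val (ms0 j i)) + p * (\sum_(j < k1) val (ms1 j i)) == l i]
     then (\prod_(j < k0) f (fun i => val (ms0 j i))) * (\prod_(j < k1) f (fun i => val (ms1 j i)))
     else 0))%N =
  (\sum_(m : {ffun 'I_N -> 'I_M.+1})
     (if [forall i, (m i <= x i)%N] then bf f B k1 (fun i => x i - m i)%N else 0%N) *
     bf f B k0 (fun i => l0 i + p * m i)%N)%N.
Proof.
move=> hl0 hl hxM; symmetry.
transitivity (\sum_(m : {ffun 'I_N -> 'I_M.+1})
  \sum_(ms1 : {ffun 'I_k1 -> {ffun 'I_N -> 'I_B}})
  \sum_(ms0 : {ffun 'I_k0 -> {ffun 'I_N -> 'I_B}})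
   (if [&& [forall i, (m i <= x i)%N],
           [forall i, (\sum_(j < k1) val (ms1 j i))%N == (x i - m i)%N] &
           [forall i, (\sum_(j < k0) val (ms0 j i))%N == (l0 i + p * m i)%N]]
    then (\prod_(j < k1) f (fun i => val (ms1 j i))) * (\prod_(j < k0) f (fun i => val (ms0 j i)))
    else 0))%N.
  apply: eq_bigr => m _; case: (boolP [forall i, _]) => hm /=.
    rewrite /bf !big_mkcond big_distrl /=; apply: eq_bigr => ms1 _.
    rewrite big_distrr /= [LHS]big_mkcond; apply: eq_bigr => ms0 _ /=.
    move: [forall i, _ == (x i - m i)%N] [forall i, _ == (l0 i + p * m i)%N] => a b.
    by case: a; case: b; rewrite /= ?mul0n ?muln0.
  by rewrite mul0n big1 // => ms1 _; rewrite big1.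
rewrite exchange_big /=.
under eq_bigr do rewrite exchange_big /=.
rewrite exchange_big /=; apply: eq_bigr => ms0 _; apply: eq_bigr => ms1 _.
set s0 := fun i => (\sum_(j < k0) val (ms0 j i))%N.
set s1 := fun i => (\sum_(j < k1) val (ms1 j i))%N.
pose mstar : {ffun 'I_N -> 'I_M.+1} := [ffun i => inord (x i - s1 i)].
have key : forall m : {ffun 'I_N -> 'I_M.+1},
  [&& [forall i, (m i <= x i)%N], [forall i, s1 i == (x i - m i)%N] &
      [forall i, s0 i == (l0 i + p * m i)%N]] =
  (m == mstar) && [forall i, s0 i + p * s1 i == l i]%N.
  move=> m.
  have -> : (m == mstar) = [forall i, val (m i) == x i - s1 i]%N.
    apply/eqP/forallP => [-> i | h].
      by rewrite /mstar ffunE; apply/eqP/inordK; rewrite ltnS (leq_trans (leq_subr _ _) (hxM i)).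
    apply/ffunP => i; apply/val_inj; rewrite /mstar ffunE; rewrite [RHS]/= inordK.
      by apply/eqP/h.
    by rewrite ltnS (leq_trans (leq_subr _ _) (hxM i)).
  rewrite !forall_and; apply: eq_forallb => i.
  by rewrite (pt _ _ _ (hl0 i) (hl i)).
under eq_bigr do rewrite key.
case: (boolP [forall i, _]) => hq.
  under eq_bigr do rewrite andbT.
  by rewrite -big_mkcond big_pred1_eq mulnC.
by rewrite big1 // => m _; rewrite andbF.
Qed.

Local Close Scope ring_scope.
Theorem theorem14 (N : nat) (f : ('I_N -> nat) -> nat) (p k k0 k1 : nat)
    (l l0 x : 'I_N -> nat) :
  (1 <= N)%N -> prime p ->
  (k0 < p)%N -> k = (k0 + k1 * p)%N ->
  (forall i, l0 i < p)%N -> (forall i, l i = l0 i + p * x i)%N ->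
  binomf f k (fun i => ((l i)%:Z)%R) =
    (\sum_(m : {ffun 'I_N -> 'I_((\max_(i < N) x i).+1)})
       binomf f k1 (fun i => ((x i)%:Z - (val (m i))%:Z)%R) *
       binomf f k0 (fun i => ((l0 i + p * val (m i))%N%:Z)%R))%N %[mod p].
Proof.
move=> _ pr hk0 hk hl0 hl.
have p0 : (0 < p)%N := prime_gt0 pr.
set M := (\max_(i < N) x i)%N.
have hxM : forall i, (x i <= M)%N by move=> i; exact: leq_bigmax.
pose b := (p * M.+1).-1.
have hB : b.+1 = (p * M.+1)%N by rewrite prednK // muln_gt0 p0.
rewrite (@binomf_bf N f b k l); last first.
  by move=> i; rewrite hB hl; have := hl0 i; have := hxM i; nia.
rewrite (eq_bigr (fun m : {ffun 'I_N -> 'I_M.+1} =>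
   (if [forall i, (m i <= x i)%N] then bf f b.+1 k1 (fun i => x i - m i)%N else 0%N) *
   bf f b.+1 k0 (fun i => l0 i + p * m i)%N)%N); last first.
  move=> m _.
  have e0 : binomf f k0 (fun i => (((l0 i + p * m i)%N)%:Z)%R) = bf f b.+1 k0 (fun i => l0 i + p * m i)%N.
    apply: binomf_bf => i; rewrite hB; have := hl0 i; have := ltn_ord (m i); nia.
  case: (boolP [forall i, (m i <= x i)%N]) => hm.
    have -> : (fun i => ((x i)%:Z - (m i)%:Z)%R) = (fun i => (((x i - m i)%N)%:Z)%R).
      by apply: functional_extensionality => i; rewrite subzn //; exact: (forallP hm i).
    rewrite (@binomf_bf N f b k1 (fun i => x i - m i)%N) ?e0 // => i; rewrite hB; have := hxM i; nia.
  move/forallPn: hm => [i0]; rewrite -ltnNge => hi0.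
  by rewrite (@binomf_neg _ _ _ _ i0) // subr_lt0 ltz_nat.
rewrite -(@natid N f p k0 k1 M b.+1 l l0 x hl0 hl hxM).
set R := (\sum_(_ : _) _)%N.
have H : (((bf f b.+1 k l)%:R : 'F_p) = R%:R)%R.
  rewrite -(coefFk f 'F_p) hk exprD mulnC exprM frobF // prodcoef.
  done.
by rewrite -!(val_Fp_nat pr) H.
Qed.
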